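(* For integers $\alpha\geq k\geq 2$, we have $\alpha-1+(k-1)\left\lfloor\frac{\alpha-1}{k-1}\right\rfloor\leq \tau(k,\alpha)\leq 2\alpha-2$.
   Context: For integers $k,\alpha\geq1$, $\tau(k,\alpha)$ is the largest integer $n$ such that there exists a $k$-uniform hypergraph on $n$ vertices with independence number less than $\alpha$ and no loose path of length two, i.e., no two edges intersecting in exactly one vertex. (The independence number is the largest size of a vertex set containing no edge.) *)

(* Defs.v *)
From mathcomp Require Import all_boot.
Set Implicit Arguments. Unset Strict Implicit. Unset Printing Implicit Defensive.

Definition k_uniform (n k : nat) (E : {set {set 'I_n}}) : Prop :=
  forall e, e \in E -> #|e| = k.

Definition no_loose_path2 (n : nat) (E : {set {set 'I_n}}) : Prop :=
  forall e f, e \in E -> f \in E -> #|e :&: f| != 1.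

Definition independent (n : nat) (E : {set {set 'I_n}}) (A : {set 'I_n}) : bool :=
  [forall e in E, ~~ (e \subset A)].

Definition indep_number (n : nat) (E : {set {set 'I_n}}) : nat :=
  \max_(A : {set 'I_n} | independent E A) #|A|.

Definition tau_admissible (k alpha n : nat) : Prop :=
  exists E : {set {set 'I_n}},
    [/\ k_uniform k E, indep_number E < alpha & no_loose_path2 E].

Definition is_tau (k alpha T : nat) : Prop :=
  tau_admissible k alpha T /\ (forall n, tau_admissible k alpha n -> n <= T).

(* Main.v *)
Require Import Defs.
From mathcomp Require Import all_boot.
From mathcomp Require Import zify.
From Stdlib Require Import Classical.

Lemma ksubset (T : finType) (B : {set T}) k : k <= #|B| ->
  exists e : {set T}, e \subset B /\ #|e| = k.
Proof.
move=> hk; exists [set x in take k (enum B)]; split.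
  by apply/subsetP => x; rewrite inE => /mem_take; rewrite mem_enum.
rewrite cardsE (card_uniqP _); first by rewrite size_takel // -cardE.
by rewrite take_uniq ?enum_uniq.
Qed.

Lemma card_interval n (B : {set 'I_n}) a b :
  (forall i, i \in B -> a <= i < b) -> #|B| <= b - a.
Proof.
move=> hB; rewrite cardE -(size_map val) -(size_iota a (b - a)).
apply: uniq_leq_size; first by rewrite map_inj_uniq ?enum_uniq //; apply: val_inj.
move=> x /mapP [i]; rewrite mem_enum => /hB hi ->; rewrite mem_iota /=; move: hi; case: i => i ip /=; lia.
Qed.

Lemma color n (E : {set {set 'I_n}}) :
  (forall e, e \in E -> 1 < #|e|) -> no_loose_path2 E ->
  exists S, independent E S /\ independent E (~: S).
Proof.
move: {2}#|E| (leqnn #|E|) => N; elim: N E => [|N IH] E.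
  rewrite leqn0 cards_eq0 => /eqP -> _ _; exists set0.
  by split; apply/forall_inP => e; rewrite in_set0.
move=> hN h2 hl; case: (set_0Vmem E) => [->|[e eE]].
  by exists set0; split; apply/forall_inP => f; rewrite in_set0.
have hN' : #|E :\ e| <= N by move: hN; rewrite (cardsD1 e E) eE.
have h2' : forall f, f \in E :\ e -> 1 < #|f|.
  by move=> f; rewrite !inE => /andP [_ /h2].
have hl' : no_loose_path2 (E :\ e).
  by move=> f g; rewrite !inE => /andP [_ fE] /andP [_ gE]; apply: hl.
have he := h2 e eE.
have main : forall S, independent (E :\ e) S -> independent (E :\ e) (~: S) ->
    e \subset S -> exists S, independent E S /\ independent E (~: S).
  move=> S iS iSc key.
  have [v ve] : exists v, v \in e.
    by apply/set0Pn; rewrite -card_gt0; apply: ltnW.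
  exists (S :\ v); split; apply/forall_inP => f fE; apply/negP => fS.
    have fe : f != e.
      apply/negP => /eqP fe; subst f; have := subsetP fS v ve.
      by rewrite !inE eqxx.
    have := forall_inP iS f; rewrite !inE fe fE => /(_ isT) /negP; apply.
    by apply: (subset_trans fS); apply: subsetDl.
  have fe : f != e.
    apply/negP => /eqP fe; subst f.
    have : e \subset [set v].
      apply/subsetP => x xe; have := subsetP key x xe; have := subsetP fS x xe.
      by rewrite !inE; case: (x == v); case: (x \in S).
    by move/subset_leq_card; rewrite cards1; lia.
  have fE' : f \in E :\ e by rewrite !inE fe fE.
  case vf: (v \in f).
    have : f :&: e = [set v].
      apply/setP => x; rewrite !inE.
      case xv: (x == v); first by rewrite (eqP xv) vf ve.
      case xf: (x \in f) => //=; case xe: (x \in e) => //.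
      have := subsetP key x xe; have := subsetP fS x xf.
      by rewrite !inE xv => /negP.
    by move=> fe1; have := hl f e fE eE; rewrite fe1 cards1.
  have := forall_inP iSc f fE' => /negP; apply.
  apply/subsetP => x xf; have := subsetP fS x xf; rewrite !inE.
  by case xv: (x == v) => //=; move: xv xf => /eqP ->; rewrite vf.
have [S [iS iSc]] := IH (E :\ e) hN' h2' hl'.
case eS: (e \subset S); first exact: main S iS iSc eS.
case eSc: (e \subset ~: S).
  by apply: (main (~: S)) => //; rewrite setCK.
exists S; split; apply/forall_inP => f fE.
  case fe: (f == e); first by rewrite (eqP fe) eS.
  by apply: (forall_inP iS); rewrite !inE fe fE.
case fe: (f == e); first by rewrite (eqP fe) eSc.
by apply: (forall_inP iSc); rewrite !inE fe fE.
Qed.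

Lemma upper k alpha n : 2 <= k -> tau_admissible k alpha n -> n <= 2 * alpha - 2.
Proof.
move=> hk [E [ku ind nl]].
have [S [iS iSc]] : exists S, independent E S /\ independent E (~: S).
  by apply: color => // e /ku ->.
have h1 : #|S| <= indep_number E by apply: (leq_bigmax_cond (P := independent E)).
have h2 : #|~: S| <= indep_number E by apply: (leq_bigmax_cond (P := independent E)).
have := cardsC S; rewrite card_ord; lia.
Qed.

Lemma grp_bounds m (i j : nat) : 0 < m -> i %/ m = j -> j * m <= i < j * m + m.
Proof.
move=> m0 <-; have := divn_eq i m; have := ltn_pmod i m0; lia.
Qed.

Lemma lower k alpha : 2 <= k -> k <= alpha ->
  tau_admissible k alpha (alpha - 1 + (k - 1) * ((alpha - 1) %/ (k - 1))).
Proof.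
move=> hk ha.
set q := (alpha - 1) %/ (k - 1).
set n := alpha - 1 + (k - 1) * q.
set m := (k - 1) + (k - 1).
have m0 : 0 < m by rewrite /m; lia.
have hq : q * (k - 1) <= alpha - 1 by apply: leq_divM.
pose G (j : nat) := [set i : 'I_n | i %/ m == j].
have cardG : forall j (B : {set 'I_n}), B \subset G j -> #|B| <= m.
  move=> j B BG; have := @card_interval n B (j * m) (j * m + m).
  have -> : j * m + m - j * m = m by lia.
  apply => i /(subsetP BG); rewrite inE => /eqP; exact: grp_bounds.
exists [set e : {set 'I_n} | (#|e| == k) && [exists j : 'I_q, e \subset G j]].
split.
- by move=> e; rewrite inE => /andP [/eqP].
- rewrite /indep_number; apply: (@leq_ltn_trans (alpha - 1)); last by lia.
  apply/bigmax_leqP => A iA.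
  pose p (i : 'I_n) : 'I_q.+1 := inord (minn (i %/ m) q).
  rewrite -sum1_card (partition_big p predT) //= big_ord_recr /=.
  have pv : forall i : 'I_n, nat_of_ord (p i) = minn (i %/ m) q.
    by move=> i; rewrite /p inordK // ltnS geq_minr.
  have hA1 : forall j : 'I_q, \sum_(i in A | p i == widen_ord (leqnSn q) j) 1 <= k - 1.
    move=> j; rewrite sum1dep_card leqNgt; apply/negP => hB.
    have [e [eB ek]] := @ksubset _ [set x | (x \in A) && (p x == widen_ord (leqnSn q) j)] k ltac:(lia).
    have eE : e \in [set e : {set 'I_n} | (#|e| == k) && [exists j : 'I_q, e \subset G j]].
      rewrite inE ek eqxx /=; apply/existsP; exists j; apply/subsetP => x xe.
      have := subsetP eB x xe; rewrite !inE => /andP [_ /eqP /(congr1 (@nat_of_ord _))].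
      rewrite pv /= => hx; apply/eqP; have := ltn_ord j; lia.
    have := forall_inP iA e eE; rewrite (subset_trans eB) //.
    by apply/subsetP => x; rewrite inE => /andP [].
  have hA2 : \sum_(i in A | p i == ord_max) 1 <= n - q * m.
    rewrite sum1dep_card; apply: card_interval => i; rewrite inE => /andP [_ /eqP /(congr1 (@nat_of_ord _))].
    rewrite pv /= => hi; rewrite ltn_ord andbT -leq_divRL //; lia.
  have hs : \sum_(i < q) \sum_(i0 in A | p i0 == widen_ord (leqnSn q) i) 1 <= q * (k - 1).
    have -> : q * (k - 1) = \sum_(i < q) (k - 1) by rewrite sum_nat_const card_ord.
    by apply: leq_sum => j _; apply: hA1.
  have e1 : q * m = q * (k - 1) + q * (k - 1) by rewrite /m mulnDr.
  have e2 : n = alpha - 1 + q * (k - 1) by rewrite /n mulnC.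
  have final : forall a b, a <= q * (k - 1) -> b <= n - q * m -> a + b <= alpha - 1.
    by move=> a b; rewrite e1 e2; lia.
  exact: final hs hA2.
- move=> e f; rewrite !inE => /andP [/eqP ek /existsP [j ej]] /andP [/eqP fk /existsP [j' fj]].
  case jj: (j == j').
    have := cardG j (e :|: f); rewrite subUset ej (eqP jj) fj => /(_ isT).
    have := cardsUI e f; rewrite ek fk /m; lia.
  suff -> : e :&: f = set0 by rewrite cards0.
  apply/setP => x; rewrite !inE; apply/negP => /andP [xe xf].
  have := subsetP ej x xe; have := subsetP fj x xf; rewrite !inE => /eqP -> /eqP /val_inj.
  by move=> jj'; rewrite jj' eqxx in jj.
Qed.

Lemma maxex (P : nat -> Prop) a b : P a -> (forall n, P n -> n <= b) ->
  exists T, P T /\ forall n, P n -> n <= T.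
Proof.
move=> Pa hb; move: {2}(b - a) (leqnn (b - a)) => d; elim: d a Pa => [|d IH] a Pa hd.
  exists a; split => // n /[dup] /hb; lia.
case: (classic (exists n, P n /\ a < n)) => [[n [Pn an]]|nex].
  apply: (IH n Pn); have := hb n Pn; lia.
exists a; split => // n Pn; rewrite leqNgt; apply/negP => an; apply: nex; by exists n.
Qed.

Theorem proposition1p6 (k alpha : nat) :
  2 <= k -> k <= alpha ->
  exists T, is_tau k alpha T /\
    alpha - 1 + (k - 1) * ((alpha - 1) %/ (k - 1)) <= T /\ T <= 2 * alpha - 2.
Proof.
move=> hk ha.
have [T [PT hT]] := @maxex _ _ (2 * alpha - 2) (@lower k alpha hk ha) (fun n => @upper k alpha n hk).
exists T; split; first by split.
split; first exact: hT (@lower k alpha hk ha).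
exact: @upper k alpha T hk PT.
Qed.
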